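(* For any $X\in T^1(\Sigma)$ the following are equivalent: (i) $X$ is an idempotent tree (its start vertex equals its end vertex); (ii) $X$ is idempotent under pruned multiplication, i.e. $XX=X$; (iii) $X=X^+$; (iv) $X=Y^+$ for some $Y\in T^1(\Sigma)$; (v) $X=X^*$; (vi) $X=Y^*$ for some $Y\in T^1(\Sigma)$.
   Context: Let $\Sigma$ be a set. A $\Sigma$-tree is a finite directed graph whose underlying undirected graph is a tree, edges labelled by elements of $\Sigma$, with distinguished start and end vertices such that there is a (possibly empty) directed path from start to end vertex. A morphism $X\to Y$ maps vertices to vertices and edges to edges, preserving initial vertex, terminal vertex and label of each edge, and mapping start/end vertex to start/end vertex; isomorphisms are morphisms bijective on vertices and edges. A retraction is an idempotent morphism $X\to X$, its image a retract; $X$ is pruned if it admits no non-identity retraction. Every tree $X$ has a pruned retract, unique up to isomorphism, whose isomorphism type is $\overline{X}$. $T^1(\Sigma)$ is the set of isomorphism types of pruned $\Sigma$-trees. Unpruned operations: $X\times Y$ identifies the end vertex of (a copy of) $X$ with the start vertex of (a disjoint copy of) $Y$, start vertex that of $X$, end vertex that of $Y$; $X^{(+)}$ is $X$ with end vertex moved to the start vertex; $X^{( * )}$ is $X$ with start vertex moved to the end vertex. Pruned operations: $XY=\overline{X\times Y}$, $X^+=\overline{X^{(+)}}$, $X^*=\overline{X^{( * )}}$. *)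

(* Defs.v *)
From Stdlib Require Import Relation_Operators.
From mathcomp Require Import all_boot.
Set Implicit Arguments. Unset Strict Implicit. Unset Printing Implicit Defensive.

(* The tree conditions are imposed separately by [valid_tree]. *)
Record sigma_tree (S : Type) := STree {
  vert : finType;
  edge : finType;
  src : edge -> vert;
  tgt : edge -> vert;
  lab : edge -> S;
  stv : vert;
  env : vert
}.

Section Trees.
Variable S : Type.
Implicit Types X Y Z : sigma_tree S.

Definition uadj X (u v : vert X) : Prop :=
  exists e : edge X, (src e = u /\ tgt e = v) \/ (src e = v /\ tgt e = u).

Definition dadj X (u v : vert X) : Prop :=
  exists e : edge X, src e = u /\ tgt e = v.

Definition underlying_tree X : Prop :=
  (forall u v : vert X, clos_refl_trans _ (@uadj X) u v) /\
  #|edge X|.+1 = #|vert X|.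

Definition valid_tree X : Prop :=
  underlying_tree X /\ clos_refl_trans _ (@dadj X) (stv X) (env X).

Definition is_mor X Y (fv : vert X -> vert Y) (fe : edge X -> edge Y) : Prop :=
  [/\ forall e, src (fe e) = fv (src e),
      forall e, tgt (fe e) = fv (tgt e),
      forall e, lab (fe e) = lab e,
      fv (stv X) = stv Y &
      fv (env X) = env Y].

Definition is_iso X Y : Prop :=
  exists fv fe, [/\ @is_mor X Y fv fe, bijective fv & bijective fe].

Definition is_retraction X (fv : vert X -> vert X) (fe : edge X -> edge X) : Prop :=
  [/\ is_mor fv fe, forall v, fv (fv v) = fv v & forall e, fe (fe e) = fe e].

Definition pruned X : Prop :=
  forall fv fe, @is_retraction X fv fe ->
    (forall v, fv v = v) /\ (forall e, fe e = e).

(* elements of T^1(S) are represented by pruned Sigma-trees *)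
Definition in_T1 X : Prop := valid_tree X /\ pruned X.

(* Y is isomorphic to a retract of Z (image of a retraction of Z):
   equivalently, there are morphisms i : Y -> Z, p : Z -> Y with p o i = id. *)
Definition retract_of Y Z : Prop :=
  exists (iv : vert Y -> vert Z) (ie : edge Y -> edge Z)
         (pv : vert Z -> vert Y) (pe : edge Z -> edge Y),
    [/\ is_mor iv ie, is_mor pv pe,
        forall v, pv (iv v) = v & forall e, pe (ie e) = e].

(* [prune_is Z X] : the isomorphism type overline(Z) equals the class of X,
   i.e. X is (isomorphic to) a pruned retract of Z. *)
Definition prune_is Z X : Prop := in_T1 X /\ retract_of X Z.

Definition tplus X : sigma_tree S :=
  @STree S (vert X) (edge X) (@src S X) (@tgt S X) (@lab S X) (stv X) (stv X).

Definition tstar X : sigma_tree S :=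
  @STree S (vert X) (edge X) (@src S X) (@tgt S X) (@lab S X) (env X) (env X).

Section Prod.
Variables X Y : sigma_tree S.

(* vertices of X x Y: those of X, plus those of Y other than its start vertex,
   which is identified with the end vertex of X *)
Definition pvert : finType := (vert X + {y : vert Y | y != stv Y})%type.

Definition inY (y : vert Y) : pvert :=
  match @idP (y != stv Y) with
  | ReflectT h => inr (exist _ y h)
  | ReflectF _ => inl (env X)
  end.

Definition pedge : finType := (edge X + edge Y)%type.

Definition psrc (e : pedge) : pvert :=
  match e with inl e => inl (src e) | inr e => inY (src e) end.
Definition ptgt (e : pedge) : pvert :=
  match e with inl e => inl (tgt e) | inr e => inY (tgt e) end.
Definition plab (e : pedge) : S :=
  match e with inl e => lab e | inr e => lab e end.

Definition tprod : sigma_tree S :=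
  @STree S pvert pedge psrc ptgt plab (inl (stv X)) (inY (env Y)).
End Prod.

End Trees.

(* Main.v *)
From Stdlib Require Import Relation_Operators ZArith Lia.
Require Import Defs.
From mathcomp Require Import all_boot.
From mathcomp Require Import zify.
Set Implicit Arguments. Unset Strict Implicit. Unset Printing Implicit Defensive.

Section Aux.
Variable S : Type.

Lemma uf_step (X : sigma_tree S) (s : seq (edge X)) :
  exists (c : vert X -> vert X) (h : vert X -> Z),
  [/\ (forall v, c (c v) = c v),
      (forall e, e \in s -> c (src e) = c (tgt e)),
      (#|vert X| <= #|[pred v | c v == v]| + size s)%N &
      ((#|vert X| = #|[pred v | c v == v]| + size s)%N ->
        forall e, e \in s -> h (tgt e) = (h (src e) + 1)%Z)].
Proof.
elim: s => [|e s [c [h [Hid Hc Hle Heq]]]].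
  exists id, (fun _ => 0%Z); split => //.
  rewrite addn0; apply: subset_leq_card; apply/subsetP => v _.
  by rewrite inE /= eqxx.
set a := c (src e); set b := c (tgt e).
case: (eqVneq a b) => Hab.
  exists c, h; split => //.
  - move=> e'; rewrite in_cons => /orP [/eqP -> //|]; exact: Hc.
  - by rewrite /= addnS; apply: leqW.
  - rewrite /= addnS => Hq; exfalso; move: Hle; rewrite Hq ltnn; lia.
pose c' v := if c v == b then a else c v.
pose h' v := if c v == b then (h v + (h (src e) + 1 - h (tgt e)))%Z else h v.
have Ha : c a = a by rewrite /a Hid.
have Hb : c b = b by rewrite /b Hid.
have Hcard : #|[pred v | c' v == v]|.+1 = #|[pred v | c v == v]|.
  rewrite (cardD1 b [pred v | c v == v]) inE /= Hb eqxx add1n; congr _.+1.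
  apply: eq_card => v; rewrite !inE /c'.
  case: (eqVneq (c v) b) => Hv.
    case: (eqVneq v b) => [->|Hvb] /=; first by rewrite (negbTE Hab).
    rewrite Hv [b == v]eq_sym (negbTE Hvb); apply/eqP => Hav.
    by move: Hv; rewrite -Hav Ha => Hv; rewrite Hv eqxx in Hab.
  case: (eqVneq v b) => [Hvb|Hvb'] /=; last by [].
  by rewrite Hvb Hb eqxx in Hv.
exists c', h'; split.
- move=> v; rewrite /c'; case: (eqVneq (c v) b) => Hv.
    by rewrite Ha (negbTE Hab).
  by rewrite Hid (negbTE Hv).
- move=> e'; rewrite in_cons => /orP [/eqP ->|He].
    by rewrite /c' -/a -/b eqxx (negbTE Hab).
  by rewrite /c' (Hc _ He).
- by rewrite /= addnS -addSn Hcard.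
- rewrite /= addnS -addSn Hcard => Hq e'; rewrite in_cons => /orP [/eqP ->|He].
    rewrite /h' -/a -/b eqxx (negbTE Hab); lia.
  have Hq' : (#|vert X| = #|[pred v | c v == v]| + size s)%N by [].
  rewrite /h' (Hc _ He) (Heq Hq' _ He).
  case: (c (tgt e') == b); lia.
Qed.

Lemma conn_const (X : sigma_tree S) (c : vert X -> vert X) :
  (forall e, c (src e) = c (tgt e)) ->
  forall u v, clos_refl_trans _ (@uadj S X) u v -> c u = c v.
Proof.
move=> Hc u v; elim => //.
- move=> x y [e [[<- <-]|[<- <-]]] //.
- by move=> x y z _ -> _ ->.
Qed.

Lemma potential (X : sigma_tree S) : underlying_tree X ->
  exists h : vert X -> Z, forall e, h (tgt e) = (h (src e) + 1)%Z.
Proof.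
move=> [Hconn Hcard].
have [c [h [Hid Hc Hle Heq]]] := uf_step (enum (edge X)).
have Hc' : forall e, c (src e) = c (tgt e) by move=> e; apply: Hc; rewrite mem_enum.
have Hr : (#|[pred v | c v == v]| <= 1)%N.
  rewrite -(card1 (c (stv X))); apply: subset_leq_card; apply/subsetP => v.
  rewrite !inE => /eqP Hv; apply/eqP.
  by rewrite -Hv; apply: conn_const.
exists h => e; apply: Heq; last by rewrite mem_enum.
move: Hle Hr; rewrite -cardE -Hcard; set r := #|[pred v | c v == v]|; set m := #|edge X|; match goal with |- ?g => idtac g end; lia.
Qed.

Lemma dpath_le (X : sigma_tree S) (h : vert X -> Z) :
  (forall e, h (tgt e) = (h (src e) + 1)%Z) ->
  forall u v, clos_refl_trans _ (@dadj S X) u v -> u = v \/ (h u < h v)%Z.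
Proof.
move=> Hh u v; elim.
- move=> x y [e [<- <-]]; right; rewrite Hh; lia.
- by left.
- move=> x y z _ [->|H1] _ [<-|H2]; [by left|right|right|right]; lia.
Qed.

Lemma dpath_inv (X Y : sigma_tree S) (hX : vert X -> Z) (hY : vert Y -> Z) fv fe :
  (forall e, hX (tgt e) = (hX (src e) + 1)%Z) ->
  (forall e, hY (tgt e) = (hY (src e) + 1)%Z) ->
  @is_mor S X Y fv fe ->
  forall u v, clos_refl_trans _ (@dadj S X) u v ->
    (hY (fv v) - hX v = hY (fv u) - hX u)%Z.
Proof.
move=> HX HY [Hs Ht _ _ _] u v; elim.
- move=> x y [e [<- <-]]; rewrite -Hs -Ht HX HY; lia.
- by [].
- move=> x y z _ H1 _ H2; lia.
Qed.

Lemma ii_i (X : sigma_tree S) : prune_is (tprod X X) X -> stv X = env X.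
Proof.
move=> [[[Htree Hpath] _] [iv [ie [pv [pe [Hi _ _ _]]]]]].
have [h Hh] := potential Htree.
pose H (p : vert (tprod X X)) : Z :=
  match p with inl x => h x | inr y => (h (val y) - h (stv X) + h (env X))%Z end.
have HY : forall y, H (@inY S X X y) = (h y - h (stv X) + h (env X))%Z.
  move=> y; rewrite /inY; destruct (@idP (y != stv X)) as [Hy|Hy] => //=.
  by move/negP: Hy; rewrite negbK => /eqP ->; lia.
have HH : forall e : edge (tprod X X), H (tgt e) = (H (src e) + 1)%Z.
  case=> e /=; first by rewrite Hh.
  rewrite !HY Hh; lia.
have := dpath_inv Hh HH Hi Hpath.
case: Hi => _ _ _ -> ->; rewrite HY /=.
move=> E.
have : h (env X) = h (stv X) by lia.
by case: (dpath_le Hh Hpath) => // ?; lia.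
Qed.

Lemma i_ii (X : sigma_tree S) : in_T1 X -> stv X = env X -> prune_is (tprod X X) X.
Proof.
move=> HX E; split => //.
pose pv (p : pvert X X) : vert X := match p with inl x => x | inr y => val y end.
pose pe (p : pedge X X) : edge X := match p with inl x => x | inr y => y end.
have HpY : forall y, pv (@inY S X X y) = y.
  move=> y; rewrite /inY; destruct (@idP (y != stv X)) as [Hy|Hy] => //=.
  by move/negP: Hy; rewrite negbK => /eqP ->.
exists inl, inl, pv, pe; split => //.
- split => //=; rewrite /inY; destruct (@idP (env X != stv X)) as [Hy|Hy] => //; exfalso; have := Hy; by rewrite -E eqxx.
- split => //.
  + by case=> e //=; rewrite HpY.
  + by case=> e //=; rewrite HpY.
  + by case.
  + by rewrite /= HpY.
Qed.

Lemma i_iii (X : sigma_tree S) : in_T1 X -> stv X = env X -> prune_is (tplus X) X.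
Proof.
move=> HX E; split => //; exists id, id, id, id; split => //; split => //=.
Qed.

Lemma i_v (X : sigma_tree S) : in_T1 X -> stv X = env X -> prune_is (tstar X) X.
Proof.
move=> HX E; split => //; exists id, id, id, id; split => //; split => //=.
Qed.

Lemma iv_i (X Y : sigma_tree S) : prune_is (tplus Y) X -> stv X = env X.
Proof.
by move=> [_ [iv [ie [pv [pe [_ [_ _ _ H1 H2] _ _]]]]]]; rewrite -H1 -H2.
Qed.

Lemma vi_i (X Y : sigma_tree S) : prune_is (tstar Y) X -> stv X = env X.
Proof.
by move=> [_ [iv [ie [pv [pe [_ [_ _ _ H1 H2] _ _]]]]]]; rewrite -H1 -H2.
Qed.

End Aux.

Theorem proposition4p8 (S : Type) (X : sigma_tree S) :
  in_T1 X ->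
  [<-> stv X = env X;
       prune_is (tprod X X) X;
       prune_is (tplus X) X;
       exists Y : sigma_tree S, in_T1 Y /\ prune_is (tplus Y) X;
       prune_is (tstar X) X;
       exists Y : sigma_tree S, in_T1 Y /\ prune_is (tstar Y) X].
Proof.
move=> HX; tfae.
- exact: i_ii.
- by move/ii_i; apply: i_iii.
- by move=> H; exists X.
- by move=> [Y [_ /iv_i E]]; apply: i_v.
- by move=> H; exists X.
- by move=> [Y [_ /vi_i]].
Qed.
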